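(* Let $S$ be a reflective numerical semigroup with $\mathrm{g}(S)\ge1$. Then \[ \mathrm{e}(S)\ \ge\ \frac{\mathrm{F}(S)+1}{\mathrm{F}(S)+1-\mathrm{g}(S)}, \] where $\mathrm{e}(S)$ denotes the embedding dimension of $S$.
   Context: A numerical semigroup is a submonoid $S$ of $(\mathbb{N}_0,+)$ with finite complement; $\mathrm{g}(S)$ is the number of its gaps (elements of $\mathbb{N}_0\setminus S$), $\mathrm{F}(S)$ is its largest gap, and $\mathrm{e}(S)$ is the cardinality of its minimal generating set. A numerical semigroup $S$ of genus $g\ge1$ is called reflective if for every $z\in\{0,1,\dots,g-1\}$ exactly one of $z$ and $z+g$ belongs to $S$. *)

(* Defs.v *)
From mathcomp Require Import all_boot.
From mathcomp Require Import all_algebra.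
Set Implicit Arguments. Unset Strict Implicit. Unset Printing Implicit Defensive.

Definition numerical_semigroup (S : pred nat) : Prop :=
  [/\ S 0,
      (forall a b, S a -> S b -> S (a + b)) &
      exists N, forall n, N <= n -> S n].

Definition gap_list (S : pred nat) (gs : seq nat) : Prop :=
  uniq gs /\ forall x, (x \in gs) = ~~ S x.

Definition is_genus (S : pred nat) (g : nat) : Prop :=
  exists gs, gap_list S gs /\ size gs = g.

Definition is_frobenius (S : pred nat) (F : nat) : Prop :=
  ~~ S F /\ forall x, F < x -> S x.

(* The minimal generating set of S is Sx \ (Sx + Sx), where Sx = S \ {0}. *)
Definition min_generator (S : pred nat) (x : nat) : bool :=
  [&& S x, 0 < x &
      ~~ [exists a : 'I_(x.+1), exists b : 'I_(x.+1),
            [&& S a, 0 < a, S b, 0 < b & a + b == x]]].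

Definition is_embedding_dim (S : pred nat) (e : nat) : Prop :=
  exists ms, [/\ uniq ms, (forall x, (x \in ms) = min_generator S x) & size ms = e].

Definition reflective (S : pred nat) (g : nat) : Prop :=
  1 <= g /\ forall z, z < g -> S z != S (z + g).

(* Main.v *)
Require Import Defs.
From mathcomp Require Import all_boot all_algebra zify.
Set Implicit Arguments. Unset Strict Implicit.
Import GRing.Theory Num.Theory.

Lemma gen_of (S : pred nat) x : S x -> 0 < x ->
  (forall a b, S a -> 0 < a -> S b -> 0 < b -> a + b = x -> False) ->
  min_generator S x.
Proof.
move=> Sx x0 H; rewrite /min_generator Sx x0 /=.
apply/negP => /existsP [a /existsP [b /and5P [Sa a0 Sb b0 /eqP ab]]].
exact: (H a b Sa a0 Sb b0 ab).
Qed.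

Lemma mulS (S : pred nat) m : S 0 -> (forall a b, S a -> S b -> S (a + b)) -> S m ->
  forall k, S (k * m).
Proof. move=> S0 Sadd Sm; elim=> [|k IH] //; rewrite mulSn; exact: Sadd. Qed.

Lemma dvdS (S : pred nat) m : S 0 -> (forall a b, S a -> S b -> S (a + b)) -> S m ->
  forall x, m %| x -> S x.
Proof. move=> S0 Sadd Sm x /dvdnP [k ->]; exact: mulS. Qed.

Lemma big_in (S : pred nat) g gs : gap_list S gs -> size gs = g ->
  (forall z, z < g -> S z != S (z + g)) -> forall x, 2 * g <= x -> S x.
Proof.
move=> [ugs mgs] sz refl x hx; apply/negPn/negP => nSx.
pose f z := if S z then z + g else z.
have : size (x :: map f (iota 0 g)) <= size gs.
  apply: uniq_leq_size.
    rewrite /= map_inj_in_uniq ?iota_uniq //; last first.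
      move=> a b; rewrite !mem_iota /= !add0n /f => ha hb.
      case: (S a); case: (S b); lia.
    rewrite andbT; apply/mapP => [[z]]; rewrite mem_iota /f => /andP [_ hz].
    case: (S z); lia.
  move=> y; rewrite inE mgs => /orP [/eqP -> //|/mapP [z]].
  rewrite mem_iota add0n /f => /andP [_ hz] ->.
  rewrite /f; have := refl z hz.
  by case Sz: (S z); case Szg: (S (z + g)); rewrite /= ?Sz ?Szg.
by rewrite /= size_map size_iota sz ltnn.
Qed.
Lemma arith q m rr E n : 1 <= q -> 2 <= m -> 0 < rr < m ->
  m - 2 + (m - rr == 1) <= E -> q * m + 1 <= n -> q * m + rr <= E * n.
Proof.
move=> q1 m2 /andP [rr0 rrm] hE hn.
have h1 : E * (q * m + 1) <= E * n by rewrite leq_mul2l hn orbT.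
apply: leq_trans h1.
move: hn; case: m m2 rrm hE => [|[|[|[|m]]]] // _ rrm hE hn.
- have -> : rr = 1 by lia. move: hE; rewrite /=. nia.
- case: rr rr0 rrm hE => [|[|[|rr]]] //= _ _ hE; nia.
- nia.
Qed.
Lemma dv (m x : nat) : 0 < x < 2 * m -> m %| x -> x = m.
Proof. move=> h /dvdnP [k hk]; subst x. have : k = 1 by nia. by move->; rewrite mul1n. Qed.

Lemma key (S : pred nat) (g F e : nat) :
  numerical_semigroup S ->
  is_genus S g -> (1 <= g)%N ->
  is_frobenius S F ->
  is_embedding_dim S e ->
  reflective S g -> g <= F /\ F.+1 <= e * (F.+1 - g).
Proof.
move=> [S0 Sadd [N HN]] [gs [gl sz]] g1 [nSF HF] [ms [ums mms sze]] [_ refl].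
have big := big_in (S:=S) gl sz refl.
have Sg : ~~ S g by have := refl 0 g1; rewrite add0n S0; case: (S g).
have gF : g <= F by rewrite leqNgt; apply/negP => /HF; apply/negP.
split => //.
have exm : exists x, (0 < x) && S x by exists N.+1; rewrite /= HN ?leqnSn.
case: (ex_minnP exm) => m /andP [m0 Sm] minm.
have dS := dvdS S0 Sadd Sm.
have ndg : ~~ (m %| g) by apply/negP => /dS; apply/negP.
have m2 : 2 <= m by case: m m0 {minm dS Sm} ndg => [|[|m]] //; rewrite dvd1n.
have diff : forall a s, a < g -> S a -> S s -> s <= a -> S (a - s).
  move=> a s ag Sa Ss sa; apply/negPn/negP => nS.
  have ag' : a - s < g by lia.
  have Sx : S (a - s + g) by move: (refl _ ag'); rewrite (negbTE nS); case: (S _).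
  have := Sadd _ _ Sx Ss; rewrite (_ : a - s + g + s = a + g); last by lia.
  by move: (refl _ ag); rewrite Sa; case: (S (a + g)).
have Alow : forall z, z < g -> S z -> m %| z.
  move=> z zg Sz.
  have := diff z (z %/ m * m) zg Sz (mulS S0 Sadd Sm _) (leq_divM z m).
  rewrite {1}(divn_eq z m) addKn => Smod.
  case: (posnP (z %% m)) => [h|hp]; first by rewrite /dvdn h.
  have := minm _ (introT andP (conj hp Smod)); rewrite leqNgt ltn_pmod //.
have Sdv : forall z, z < g -> S z = (m %| z).
  move=> z zg; apply/idP/idP; [exact: Alow | exact: dS].
have Sup : forall z, z < g -> S (z + g) = ~~ (m %| z).
  move=> z zg; have := refl z zg; rewrite Sdv //; case: (m %| z); case: (S _) => //.
have classify : forall a, S a -> 0 < a -> g < a \/ (a < g /\ m %| a /\ m <= a).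
  move=> a Sa a0; case: (ltngtP a g) => [ag|ga|ag]; [right|left|] => //.
    by split => //; split; [exact: Alow | apply: minm; rewrite a0 Sa].
  by move: Sg; rewrite -ag Sa.
have esize : forall L, uniq L -> (forall x, x \in L -> min_generator S x) -> size L <= e.
  move=> L uL hL; rewrite -sze; apply: uniq_leq_size => // x xL; rewrite mms; exact: hL.
set q := g %/ m; set rr := g %% m.
have gdec : g = q * m + rr by rewrite /q /rr -divn_eq.
have rr0 : 0 < rr by rewrite lt0n; move: ndg; rewrite /dvdn.
have rrm : rr < m by rewrite ltn_pmod.
have qmg : q * m < g by lia.
have Fge : g + q * m <= F.
  rewrite leqNgt; apply/negP => /HF; rewrite addnC Sup // dvdn_mull //.
case: (posnP q) => [q0|q1].
  have gm : g < m by lia.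
  pose L := [seq g + z | z <- iota 1 g.+1].
  have : size L <= e.
    apply: esize.
      rewrite map_inj_in_uniq ?iota_uniq // => a b _ _; lia.
    move=> x /mapP [z]; rewrite mem_iota => /andP [z1 zg] ->.
    apply: gen_of; last first.
    + move=> a b Sa a0 Sb b0 ab.
      case: (classify a Sa a0) => [ha|[ha1 [_ ha]]]; last by lia.
      case: (classify b Sb b0) => [hb|[hb1 [_ hb]]]; lia.
    + lia.
    case: (ltnP z g) => zg'.
      rewrite addnC Sup //; apply/negP => /(dvdn_leq z1); lia.
    apply: big; lia.
  rewrite size_map size_iota => he; nia.
set r := m - rr.
have r1 : 0 < r < m by lia.
have mg : m < g by nia.
pose L := m :: [seq g + z | z <- rem r (iota 1 m.-1)] ++ (if r == 1 then [:: 2 * g + 1] else [::]).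
have : size L <= e.
  apply: esize.
    rewrite /L /= cat_uniq map_inj_in_uniq ?rem_uniq ?iota_uniq //; last first.
      move=> a b _ _; lia.
    apply/andP; split.
      rewrite mem_cat negb_or; apply/andP; split.
        apply/mapP => [[z _]]; lia.
      case: (r == 1) => //; rewrite inE; lia.
    case: (r == 1) => //=; rewrite ?orbF ?andbT.
    apply/mapP => [[z]]; rewrite mem_rem_uniq ?iota_uniq // => /andP [_].
    rewrite mem_iota => /andP [z1 zm]; lia.
  move=> x; rewrite /L inE mem_cat => /orP [/eqP ->|/orP [|]].
  - apply: gen_of => // a b _ a0 Sb b0 ab.
    have := minm b; rewrite b0 Sb => /(_ isT); lia.
  - move=> /mapP [z]; rewrite mem_rem_uniq ?iota_uniq // => /andP [zr].
    rewrite mem_iota => /andP [z1 zm] ->.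
    have zg : z < g by lia.
    apply: gen_of; last first.
    + move=> a b Sa a0 Sb b0 ab.
      case: (classify a Sa a0) => [ha|[ha [da ma]]];
      case: (classify b Sb b0) => [hb|[hb [db mb]]]; try lia.
      have : m %| rr + z.
        by rewrite -(dvdn_addr _ (dvdn_mull q (dvdnn m))) addnA -gdec -ab dvdn_add.
      move/(dv (m:=m) (x:=rr + z)) => h.
      have : rr + z = m by apply: h; lia.
      move: zr; rewrite /r; lia.
    + lia.
    rewrite addnC Sup //; apply/negP => /(dvdn_leq z1); lia.
  - case: ifP => // /eqP rE; rewrite inE => /eqP ->.
    have gp1 : m %| g.+1.
      by rewrite (_ : g.+1 = q.+1 * m) ?dvdn_mull //; rewrite mulSn; lia.
    apply: gen_of; [apply: big; lia | lia |].
    have side : forall a b, S a -> 0 < a -> S b -> 0 < b -> a + b = 2 * g + 1 ->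
        a < g -> False.
      move=> a b Sa a0 Sb b0 ab ag.
      have da := Alow a ag Sa.
      have ma : m <= a by apply: minm; rewrite a0 Sa.
      case: (classify b Sb b0) => [hb|[hb _]]; last by lia.
      have bE : b = (g.+1 - a) + g by lia.
      move: Sb; rewrite bE Sup; last by lia.
      have : m %| (g.+1 - a) + a by rewrite subnK ?gp1 //; lia.
      by rewrite dvdn_addl // => ->.
    move=> a b Sa a0 Sb b0 ab.
    case: (classify a Sa a0) => [ha|[ha _]]; last exact: (side a b).
    case: (classify b Sb b0) => [hb|[hb _]]; first lia.
    by apply: (side b a) => //; rewrite addnC.
rewrite /L /= size_cat size_map size_rem ?size_iota; last first.
  by rewrite mem_iota; lia.
move=> he.
have hE : m - 2 + (m - rr == 1) <= e - 1.
  by move: he; rewrite -/r; case: (r == 1) => /=; lia.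
have := arith q1 m2 (introT andP (conj rr0 rrm)) hE (_ : q * m + 1 <= F.+1 - g).
rewrite -gdec => h; nia.
Qed.

Local Open Scope ring_scope.

Theorem mainTheorem14 (S : pred nat) (g F e : nat) :
  numerical_semigroup S ->
  is_genus S g -> (1 <= g)%N ->
  is_frobenius S F ->
  is_embedding_dim S e ->
  reflective S g ->
  (F.+1)%:R / (F.+1 - g)%:R <= (e%:R : rat).
Proof.
move=> h1 h2 h3 h4 h5 h6.
have [gF k] := key h1 h2 h3 h4 h5 h6.
have hp : (0 < F.+1 - g)%N by rewrite subn_gt0 ltnS.
rewrite ler_pdivrMr; last by rewrite ltr0n.
by rewrite -natrM ler_nat.
Qed.
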